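(* Let $\mathbf S=\langle S,+,0,\mathscr F\rangle$ be a semilattice with operators. For $\theta\in\operatorname{Con}\mathbf S$ with $0$-class $I$, let $\eta(\theta)$ be the semilattice congruence generated by $I$ (so $x\,\eta(\theta)\,y$ iff $x+i=y+i$ for some $i\in I$) and let $\tau(\theta)$ be the relation with $x\,\tau(\theta)\,y$ iff for all $h\in\mathscr F^\dagger$, $h(x)\in I\Leftrightarrow h(y)\in I$. Then the lattice $\operatorname{Con}\mathbf S$ is partitioned into the intervals $[\eta(\theta),\tau(\theta)]$, each such interval consisting of exactly the congruences having the same $0$-class (which is an $\mathscr F$-closed ideal) as $\theta$.
   Context: A semilattice with operators is a join semilattice $(S,+)$ with least element $0$ together with a set $\mathscr F$ of unary maps preserving $+$ and $0$; congruences are equivalence relations compatible with $+$ and all $f\in\mathscr F$. $\mathscr F^\dagger$ denotes the monoid generated by $\mathscr F$ under composition, including the identity map. *)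

(* Defs.v *)
From Stdlib Require Import Relations.
Set Implicit Arguments.
Unset Strict Implicit.

Section SWO.
Variable S : Type.
Variable add : S -> S -> S.
Variable zero : S.
Variable F : (S -> S) -> Prop.

Definition is_semilattice_with_operators : Prop :=
  (forall x y z, add x (add y z) = add (add x y) z) /\
  (forall x y, add x y = add y x) /\
  (forall x, add x x = x) /\
  (forall x, add zero x = x) /\
  (forall f, F f -> (forall x y, f (add x y) = add (f x) (f y)) /\ f zero = zero).

Definition sle (x y : S) : Prop := add x y = y.

Inductive Fdag : (S -> S) -> Prop :=
| Fdag_id : Fdag (fun x => x)
| Fdag_comp : forall f h, F f -> Fdag h -> Fdag (fun x => f (h x)).

Definition is_equivalence (r : S -> S -> Prop) : Prop :=
  (forall x, r x x) /\ (forall x y, r x y -> r y x) /\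
  (forall x y z, r x y -> r y z -> r x z).

Definition is_congruence (r : S -> S -> Prop) : Prop :=
  is_equivalence r /\
  (forall x y u v, r x y -> r u v -> r (add x u) (add y v)) /\
  (forall f, F f -> forall x y, r x y -> r (f x) (f y)).

Definition rel_le (r s : S -> S -> Prop) : Prop := forall x y, r x y -> s x y.

Definition zero_class (r : S -> S -> Prop) : S -> Prop := fun x => r x zero.

Definition same_set (A B : S -> Prop) : Prop := forall x, A x <-> B x.

Definition is_ideal (I : S -> Prop) : Prop :=
  (exists x, I x) /\
  (forall x y, sle x y -> I y -> I x) /\
  (forall x y, I x -> I y -> I (add x y)).

Definition F_closed (I : S -> Prop) : Prop :=
  forall f, F f -> forall x, I x -> I (f x).

Definition eta (theta : S -> S -> Prop) : S -> S -> Prop :=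
  fun x y => exists i, zero_class theta i /\ add x i = add y i.

Definition tau (theta : S -> S -> Prop) : S -> S -> Prop :=
  fun x y => forall h, Fdag h ->
    (zero_class theta (h x) <-> zero_class theta (h y)).

End SWO.

(* Main.v *)
Require Import Defs.
Set Implicit Arguments.

Section Aux.
Variable S : Type.
Variable add : S -> S -> S.
Variable zero : S.
Variable F : (S -> S) -> Prop.
Hypothesis HS : is_semilattice_with_operators add zero F.

Lemma fdag_add h : Fdag F h -> forall x y, h (add x y) = add (h x) (h y).
Proof.
  destruct HS as (_&_&_&_&HF).
  induction 1; intros; simpl; [reflexivity|].
  rewrite IHFdag. apply (proj1 (HF f H)).
Qed.

Lemma fdag_zero h : Fdag F h -> h zero = zero.
Proof.
  destruct HS as (_&_&_&_&HF).
  induction 1; simpl; [reflexivity|].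
  rewrite IHFdag. apply (proj2 (HF f H)).
Qed.

Lemma fdag_compr h f : Fdag F h -> F f -> Fdag F (fun x => h (f x)).
Proof.
  induction 1; intros Hf.
  - exact (Fdag_comp Hf (Fdag_id F)).
  - exact (Fdag_comp H (IHFdag Hf)).
Qed.

Lemma add0r x : add x zero = x.
Proof. destruct HS as (_&C&_&Z&_). rewrite C. apply Z. Qed.

Lemma cong_fdag r : is_congruence add F r -> forall h, Fdag F h ->
  forall x y, r x y -> r (h x) (h y).
Proof.
  intros (_&_&Hf). induction 1; intros; auto.
Qed.

Lemma zc_add r : is_congruence add F r -> forall x y,
  zero_class zero r (add x y) <-> (zero_class zero r x /\ zero_class zero r y).
Proof.
  intros Hr. pose proof Hr as ((Rf&Rs&Rt)&Ra&_).
  destruct HS as (A&C&Id&Z&_). unfold zero_class. intros x y; split.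
  - intros H.
    assert (Hx : r (add x (add x y)) x).
    { pose proof (Ra _ _ _ _ (Rf x) H) as H1. rewrite add0r in H1. exact H1. }
    assert (Hy : r (add y (add x y)) y).
    { pose proof (Ra _ _ _ _ (Rf y) H) as H1. rewrite add0r in H1. exact H1. }
    rewrite A, Id in Hx.
    rewrite (C x y), A, Id, (C y x) in Hy.
    split; [exact (Rt _ _ _ (Rs _ _ Hx) H)|exact (Rt _ _ _ (Rs _ _ Hy) H)].
  - intros [Hx Hy]. pose proof (Ra _ _ _ _ Hx Hy) as H. rewrite Z in H. exact H.
Qed.

Lemma eta_le r : is_congruence add F r -> rel_le (eta add zero r) r.
Proof.
  intros ((Rf&Rs&Rt)&Ra&_) x y [i [Hi E]].
  unfold zero_class in Hi.
  pose proof (Ra _ _ _ _ (Rf x) Hi) as H1. rewrite add0r in H1.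
  pose proof (Ra _ _ _ _ (Rf y) Hi) as H2. rewrite add0r in H2.
  rewrite E in H1. exact (Rt _ _ _ (Rs _ _ H1) H2).
Qed.

End Aux.

Theorem theorem5p2 (S : Type) (add : S -> S -> S) (zero : S)
  (F : (S -> S) -> Prop)
  (HS : is_semilattice_with_operators add zero F)
  (theta : S -> S -> Prop)
  (Htheta : is_congruence add F theta) :
  (* the 0-class of theta is an F-closed ideal *)
  (is_ideal add (zero_class zero theta) /\ F_closed F (zero_class zero theta)) /\
  (* eta(theta) and tau(theta) are congruences, and theta lies between them *)
  is_congruence add F (eta add zero theta) /\
  is_congruence add F (tau zero F theta) /\
  rel_le (eta add zero theta) theta /\ rel_le theta (tau zero F theta) /\
  (* the interval [eta(theta), tau(theta)] of Con S consists exactly of the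
     congruences with the same 0-class as theta *)
  (forall psi, is_congruence add F psi ->
     (same_set (zero_class zero psi) (zero_class zero theta) <->
      (rel_le (eta add zero theta) psi /\ rel_le psi (tau zero F theta)))).
Proof.
  pose proof HS as (A&C&Id&Z&HF).
  pose proof Htheta as ((Rf&Rs&Rt)&Ra&Rfun).
  assert (AC : forall a b c d, add (add a b) (add c d) = add (add a c) (add b d)).
  { intros. rewrite <- !A. f_equal. rewrite !A. f_equal. apply C. }
  assert (Hthle : forall psi, is_congruence add F psi -> rel_le psi (tau zero F psi)).
  { intros psi Hp x y H h Hh. unfold zero_class.
    pose proof (cong_fdag Hp Hh _ _ H) as H1. destruct Hp as ((Pf&Ps&Pt)&_).
    split; intro; [apply (Pt _ _ _ (Ps _ _ H1)) | apply (Pt _ _ _ H1)]; assumption. }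
  split; [split|].
  - split; [exists zero; apply Rf|split].
    + intros x y Hxy Hy. unfold sle in Hxy.
      apply (proj1 (zc_add HS Htheta x y)). rewrite Hxy. exact Hy.
    + intros x y Hx Hy. apply (proj2 (zc_add HS Htheta x y)). auto.
  - intros f Hf x Hx. unfold zero_class in *.
    rewrite <- (proj2 (HF f Hf)). auto.
  - split; [split; [split; [|split]|split]|split; [split; [split; [|split]|split]|]].
    + intros x. exists zero. split; [apply Rf|reflexivity].
    + intros x y [i [Hi E]]. exists i. auto.
    + intros x y z [i [Hi E]] [j [Hj E']]. exists (add i j).
      split; [apply (proj2 (zc_add HS Htheta i j)); auto|].
      rewrite !A. rewrite E. rewrite <- !A. rewrite (C i j). rewrite !A.
      rewrite E'. reflexivity.
    + intros x y u v [i [Hi E]] [j [Hj E']]. exists (add i j).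
      split; [apply (proj2 (zc_add HS Htheta i j)); auto|].
      rewrite (AC x u i j), (AC y v i j), E, E'. reflexivity.
    + intros f Hf x y [i [Hi E]]. exists (f i). split.
      * unfold zero_class in *. rewrite <- (proj2 (HF f Hf)). auto.
      * rewrite <- !(proj1 (HF f Hf)). rewrite E. reflexivity.
    + intros x h _. tauto.
    + intros x y H h Hh. specialize (H h Hh). tauto.
    + intros x y z H1 H2 h Hh. specialize (H1 h Hh). specialize (H2 h Hh). tauto.
    + intros x y u v H1 H2 h Hh. rewrite !(fdag_add HS Hh).
      pose proof (zc_add HS Htheta (h x) (h u)).
      pose proof (zc_add HS Htheta (h y) (h v)). specialize (H1 h Hh). specialize (H2 h Hh). tauto.
    + intros f Hf x y H h Hh. apply (H (fun z => h (f z))).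
      apply (fdag_compr f Hh Hf).
    + split; [exact (eta_le HS Htheta)|split; [exact (Hthle theta Htheta)|]].
      intros psi Hp. split.
      * intros Hss. split.
        -- intros x y [i [Hi E]]. apply (eta_le HS Hp). exists i.
           split; auto. apply Hss; auto.
        -- intros x y H h Hh. pose proof (Hthle psi Hp x y H h Hh) as H1.
           pose proof (Hss (h x)). pose proof (Hss (h y)). tauto.
      * intros [H1 H2] x. split.
        -- intros Hx. pose proof (H2 x zero Hx (fun z => z) (Fdag_id F)) as H3.
           simpl in H3. apply H3. apply Rf.
        -- intros Hx. apply H1. exists x. split; auto.
           rewrite Id, Z. reflexivity.
Qed.
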